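(* Let $d$ be an odd prime and $n\ge 2$. Let $\bar X_1,\bar Z_1,\dots,\bar X_n,\bar Z_n\in\mathcal{P}_d^n$ be such that the association $X_i\mapsto\bar X_i$, $Z_i\mapsto\bar Z_i$ ($i=1,\dots,n$) is commutation relation preserving, and suppose $\bar X_1=X\otimes P'$ and $\bar Z_1=Z\otimes Q'$ for some $P',Q'\in\mathcal{P}_d^{n-1}$. Then there exists a circuit $U$ built from the gates $C_X$, $F$, $S$ such that $UX_1U^{-1}=\lambda\, X\otimes P'$ and $UZ_1U^{-1}=\mu\, Z\otimes Q'$ for some complex scalars $\lambda,\mu$.
   Context: $\omega=e^{2\pi i/d}$; $X|j\rangle=|j+1\bmod d\rangle$, $Z|j\rangle=\omega^j|j\rangle$, $F|j\rangle=\frac1{\sqrt d}\sum_m\omega^{jm}|m\rangle$, $S|j\rangle=\omega^{j(j+1)/2}|j\rangle$, $C_X|j\rangle|k\rangle=|j\rangle|j+k\bmod d\rangle$. $X_i,Z_i$ denote $X,Z$ acting on qudit $i$ (identity elsewhere). $\mathcal{P}_d^n$ is the group of operators $\omega^kZ_1^{a_1}X_1^{b_1}\cdots Z_n^{a_n}X_n^{b_n}$. For $P=\omega^kZ_1^{a_1}X_1^{b_1}\cdots Z_n^{a_n}X_n^{b_n}$, $Q=\omega^lZ_1^{c_1}X_1^{e_1}\cdots Z_n^{c_n}X_n^{e_n}$ define $(P,Q)=\sum_i(a_ie_i-b_ic_i)\in\mathbb{Z}_d$ (so $PQ=\omega^{(P,Q)}QP$). An association $P_i\mapsto\bar P_i$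 between equal-size indexed families in $\mathcal{P}_d^n$ is commutation relation preserving if $(P_i,P_j)=(\bar P_i,\bar P_j)$ for all $i,j$. A circuit built from a gate set is a finite product of gates from the set, one-qudit gates on any qudit, two-qudit gates on any ordered pair of distinct qudits. *)

(* Defs.v *)
From HB Require Import structures.
From mathcomp Require Import all_boot all_order all_algebra all_field.
Set Implicit Arguments. Unset Strict Implicit. Unset Printing Implicit Defensive.
Import Order.TTheory GRing.Theory Num.Theory.
Local Open Scope ring_scope.

(* omega = e^{2 pi i/d}: d.-root (-1) is e^{i pi/d} (root of minimal
   nonnegative argument), its square is e^{2 pi i/d}. *)
Definition omega (d : nat) : algC := (d.-root (-1)) ^+ 2.

Definition state (d n : nat) := {ffun 'I_n -> 'I_d}.

Definition op (d n : nat) := 'M[algC]_#|{: state d n}|.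

Definition mkop (d n : nat) (f : state d n -> state d n -> algC) : op d n :=
  \matrix_(i, j) f (enum_val i) (enum_val j).

Definition agree_off (d n : nat) (i : 'I_n) (s t : state d n) : bool :=
  [forall k, (k != i) ==> (s k == t k)].

(* X_i |j> = |j+1 mod d> on qudit i *)
Definition Xq (d n : nat) (i : 'I_n) : op d n :=
  mkop (fun s t => ((agree_off i s t) && (val (s i) == (val (t i) + 1) %% d)%N)%:R).

Definition Zq (d n : nat) (i : 'I_n) : op d n :=
  mkop (fun s t => (s == t)%:R * omega d ^+ val (t i)).

(* F_i |j> = 1/sqrt d sum_m omega^{jm} |m> on qudit i *)
Definition Fq (d n : nat) (i : 'I_n) : op d n :=
  mkop (fun s t => (agree_off i s t)%:R * omega d ^+ (val (t i) * val (s i))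
                   / sqrtC d%:R).

Definition Sq (d n : nat) (i : 'I_n) : op d n :=
  mkop (fun s t => (s == t)%:R * omega d ^+ ((val (t i) * (val (t i)).+1) %/ 2)%N).

(* C_X on ordered pair (i, j): |a>_i |b>_j -> |a>_i |a+b mod d>_j *)
Definition CXq (d n : nat) (i j : 'I_n) : op d n :=
  mkop (fun s t => ([forall k, (k != j) ==> (s k == t k)]
                    && (val (s j) == (val (t i) + val (t j)) %% d)%N)%:R).

(* matrix power by iterated product (op d n is not syntactically a ring) *)
Definition mxpow (d n : nat) (A : op d n) (e : nat) : op d n :=
  iter e (mulmx A) 1%:M.

(* Pauli data: omega^k Z_1^{a_1} X_1^{b_1} ... Z_n^{a_n} X_n^{b_n} *)
Record pdata (n : nat) := PData { pk : nat; pa : 'I_n -> nat; pb : 'I_n -> nat }.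

Definition pauli (d n : nat) (P : pdata n) : op d n :=
  omega d ^+ pk P *:
    foldr (fun i M => (mxpow (Zq d i) (pa P i) *m mxpow (Xq d i) (pb P i)) *m M)
          1%:M (enum 'I_n).

(* the symplectic form (P,Q) = sum_i (a_i e_i - b_i c_i), as an integer
   (to be compared modulo d) *)
Definition sympl (n : nat) (P Q : pdata n) : int :=
  \sum_(i < n) ((pa P i * pb Q i)%:Z - (pb P i * pa Q i)%:Z).

(* the standard generators: (i, false) |-> X_i, (i, true) |-> Z_i *)
Definition std_gen (n : nat) (u : 'I_n * bool) : pdata n :=
  if u.2 then PData 0 (fun k => (k == u.1 : nat)) (fun _ => 0%N)
  else PData 0 (fun _ => 0%N) (fun k => (k == u.1 : nat)).

Definition comm_preserving (d n : nat) (Pbar : 'I_n * bool -> pdata n) : Prop :=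
  forall u v, (sympl (std_gen u) (std_gen v) = sympl (Pbar u) (Pbar v) %[mod d])%Z.

Inductive gate (n : nat) := GF of 'I_n | GS of 'I_n | GCX of 'I_n & 'I_n.

Definition gate_ok (n : nat) (g : gate n) : bool :=
  if g is GCX i j then i != j else true.

Definition gate_op (d n : nat) (g : gate n) : op d n :=
  match g with GF i => Fq d i | GS i => Sq d i | GCX i j => CXq d i j end.

Definition circuit_op (d n : nat) (c : seq (gate n)) : op d n :=
  foldr (fun g M => gate_op d g *m M) 1%:M c.

Definition q1 (n : nat) (hn : (0 < n)%N) : 'I_n := Ordinal hn.

(* Main.v *)
Require Import Defs.
From HB Require Import structures.
From mathcomp Require Import all_boot all_order all_algebra all_field.
From mathcomp Require Import ring.
Set Implicit Arguments. Unset Strict Implicit. Unset Printing Implicit Defensive.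
Import Order.TTheory GRing.Theory Num.Theory.
Local Open Scope ring_scope.

Section Setup.
Variable m : nat.
Local Notation D := m.+2.
Variable n : nat.
Local Notation st := (state D n).
Local Notation Op := (op D n).

Definition ph (x : 'I_D) : algC := omega D ^+ x.

Lemma omegaD : omega D ^+ D = 1.
Proof. by rewrite /omega -exprM mulnC exprM rootCK // expr2 mulrNN mulr1. Qed.

Lemma omega_neq0 : omega D != 0.
Proof. by have := oner_neq0 algC; rewrite -omegaD expf_eq0. Qed.

Lemma ph_nat k : omega D ^+ k = ph k%:R.
Proof. by rewrite /ph Zp_nat /= expr_mod // omegaD. Qed.

Lemma phD x y : ph (x + y) = ph x * ph y.
Proof. by rewrite /ph -exprD /= expr_mod // omegaD. Qed.

Lemma ph0 : ph 0 = 1. Proof. by rewrite /ph expr0. Qed.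

Lemma phM_nat (x y : 'I_D) : omega D ^+ (x * y)%N = ph (x * y).
Proof. by rewrite /ph /= expr_mod // omegaD. Qed.

Lemma ph_neq0 x : ph x != 0.
Proof. by rewrite /ph expf_neq0 // omega_neq0. Qed.

Lemma ph_eq x y : x = y -> ph x = ph y. Proof. by move->. Qed.

Lemma mkopE f i j : (mkop f : Op) i j = f (enum_val i) (enum_val j).
Proof. by rewrite mxE. Qed.

Lemma mkop_ext f g : (forall s t, f s t = g s t) -> (mkop f : Op) = mkop g.
Proof. by move=> h; apply/matrixP => i j; rewrite !mxE h. Qed.

Lemma mul_mkop f g : (mkop f : Op) *m mkop g = mkop (fun s t => \sum_u f s u * g u t).
Proof.
apply/matrixP => i j; rewrite !mxE.
rewrite (reindex (@enum_rank _)) /=; last first.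
  by exists (@enum_val _ _) => x _; rewrite ?enum_rankK ?enum_valK.
by apply: eq_bigr => u _; rewrite !mxE enum_rankK.
Qed.

Lemma scale_mkop c f : c *: (mkop f : Op) = mkop (fun s t => c * f s t).
Proof. by apply/matrixP => i j; rewrite !mxE. Qed.

Lemma one_mkop : (1%:M : Op) = mkop (fun s t => (s == t)%:R).
Proof.
apply/matrixP => i j; rewrite !mxE.
by rewrite (inj_eq enum_val_inj).
Qed.

Lemma sum_delta_r (F : st -> algC) v : \sum_u F u * (u == v)%:R = F v.
Proof.
rewrite (bigD1 v) //= eqxx mulr1 big1 ?addr0 // => u /negbTE ->.
by rewrite mulr0.
Qed.

Lemma sum_delta_l (F : st -> algC) v : \sum_u (v == u)%:R * F u = F v.
Proof.
rewrite (bigD1 v) //= eqxx mul1r big1 ?addr0 // => u; rewrite eq_sym => /negbTE ->.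
by rewrite mul0r.
Qed.


Definition vec := {ffun 'I_n -> 'I_D}.
Definition vadd (a b : vec) : vec := [ffun k => a k + b k].
Definition vneg (a : vec) : vec := [ffun k => - a k].
Definition shift (b : vec) (t : st) : st := vadd t b.
Definition dot (a s : vec) : 'I_D := \sum_k a k * s k.
Definition popk (a b : vec) (s t : st) : algC := (s == shift b t)%:R * ph (dot a s).
Definition pop (a b : vec) : Op := mkop (popk a b).

Lemma dot_addr a b c : dot a (vadd b c) = dot a b + dot a c.
Proof. by rewrite /dot -big_split; apply: eq_bigr => k _; rewrite ffunE mulrDr. Qed.

Lemma dot_addl a b c : dot (vadd a b) c = dot a c + dot b c.
Proof. by rewrite /dot -big_split; apply: eq_bigr => k _; rewrite ffunE mulrDl. Qed.

Lemma shift_eq b s u : (s == shift b u) = (u == shift (vneg b) s).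
Proof.
apply/eqP/eqP => [->|->]; apply/ffunP => k; by rewrite !ffunE ?addrK ?subrK.
Qed.

Lemma mul_pop_r f a b : (mkop f : Op) *m pop a b =
  mkop (fun s t => f s (shift b t) * ph (dot a (shift b t))).
Proof.
rewrite mul_mkop; apply: mkop_ext => s t.
rewrite -[RHS](sum_delta_r (fun u => f s u * ph (dot a u))).
by apply: eq_bigr => u _; rewrite /popk mulrA mulrAC.
Qed.

Lemma mul_pop_l g a b : pop a b *m (mkop g : Op) =
  mkop (fun s t => ph (dot a s) * g (shift (vneg b) s) t).
Proof.
rewrite mul_mkop; apply: mkop_ext => s t.
rewrite -[RHS](sum_delta_l (fun u => ph (dot a s) * g u t)).
by apply: eq_bigr => u _; rewrite /popk shift_eq eq_sym mulrA.
Qed.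

Lemma vaddC a b : vadd a b = vadd b a.
Proof. by apply/ffunP => k; rewrite !ffunE addrC. Qed.

Lemma shiftA b c t : shift b (shift c t) = shift (vadd c b) t.
Proof. by apply/ffunP => k; rewrite !ffunE addrA. Qed.

Lemma pop_mul a b a' b' : pop a b *m pop a' b' =
  ph (- dot a' b) *: pop (vadd a a') (vadd b b').
Proof.
rewrite {1}/pop mul_pop_r /pop scale_mkop; apply: mkop_ext => s t.
rewrite /popk shiftA vaddC.
have [->|_] := eqVneq s (shift (vadd b b') t); last by rewrite !mul0r mulr0.
rewrite !mul1r -!phD; apply: ph_eq; rewrite /shift !(dot_addl, dot_addr); ring.
Qed.


Definition evec (i : 'I_n) (x : 'I_D) : vec := [ffun k => if k == i then x else 0].
Definition vzero : vec := [ffun _ => 0].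

Lemma dot_evec i x s : dot (evec i x) s = x * s i.
Proof.
rewrite /dot (bigD1 i) //= ffunE eqxx big1 ?addr0 // => k nk.
by rewrite ffunE (negbTE nk) mul0r.
Qed.

Lemma dot_vzero s : dot vzero s = 0.
Proof. by rewrite /dot big1 // => k _; rewrite ffunE mul0r. Qed.

Lemma dot_vzero_r s : dot s vzero = 0.
Proof. by rewrite /dot big1 // => k _; rewrite ffunE mulr0. Qed.

Lemma shift_vzero t : shift vzero t = t.
Proof. by apply/ffunP => k; rewrite !ffunE addr0. Qed.

Lemma one_pop : (1%:M : Op) = pop vzero vzero.
Proof.
rewrite one_mkop; apply: mkop_ext => s t.
by rewrite /popk shift_vzero dot_vzero ph0 mulr1.
Qed.

Lemma Zq_pop i : Zq D i = pop (evec i 1) vzero.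
Proof.
apply: mkop_ext => s t; rewrite /popk shift_vzero dot_evec mul1r.
by have [->|_] := eqVneq s t; rewrite ?mul0r // /ph.
Qed.

Lemma Xq_pop i : Xq D i = pop vzero (evec i 1).
Proof.
apply: mkop_ext => s t; rewrite /popk dot_vzero ph0 mulr1; congr ((nat_of_bool _)%:R).
apply/andP/eqP => [[/forallP h1 /eqP h2]|->].
  apply/ffunP => k; rewrite !ffunE.
  case: eqP => [->|/eqP nk]; first by apply: val_inj; rewrite /= h2.
  by rewrite addr0; apply/eqP; exact: (implyP (h1 k) nk).
split; last by rewrite !ffunE eqxx.
by apply/forallP => k; apply/implyP => nk; rewrite !ffunE (negbTE nk) addr0.
Qed.

Lemma evec0 i : evec i 0 = vzero.
Proof. by apply/ffunP => k; rewrite !ffunE; case: ifP. Qed.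

Lemma vadd_evec i x y : vadd (evec i x) (evec i y) = evec i (x + y).
Proof. by apply/ffunP => k; rewrite !ffunE; case: ifP; rewrite ?addr0. Qed.

Lemma vadd0 a : vadd vzero a = a.
Proof. by apply/ffunP => k; rewrite !ffunE add0r. Qed.

Lemma vadd0r a : vadd a vzero = a.
Proof. by apply/ffunP => k; rewrite !ffunE addr0. Qed.

Lemma mxpow_Z i e : mxpow (Zq D i) e = pop (evec i e%:R) vzero.
Proof.
elim: e => [|e IH]; first by rewrite evec0 /mxpow /= one_pop.
rewrite /mxpow iterS -/(mxpow _ e) IH Zq_pop pop_mul dot_vzero_r oppr0 ph0 scale1r.
by rewrite vadd_evec vadd0 -mulrS.
Qed.

Lemma mxpow_X i e : mxpow (Xq D i) e = pop vzero (evec i e%:R).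
Proof.
elim: e => [|e IH]; first by rewrite evec0 /mxpow /= one_pop.
rewrite /mxpow iterS -/(mxpow _ e) IH Xq_pop pop_mul dot_vzero oppr0 ph0 scale1r.
by rewrite vadd_evec vadd0 -mulrS.
Qed.


Definition restr (f : 'I_n -> nat) (r : seq 'I_n) : vec :=
  [ffun k => if k \in r then (f k)%:R else 0].

Lemma foldr_pop (fa fb : 'I_n -> nat) (r : seq 'I_n) : uniq r ->
  exists2 c, c != 0 &
  foldr (fun i M => (mxpow (Zq D i) (fa i) *m mxpow (Xq D i) (fb i)) *m M)
     (1%:M : Op) r = c *: pop (restr fa r) (restr fb r).
Proof.
elim: r => [_|i r IH /= /andP [ni ur]].
  exists 1; first exact: oner_neq0.
  rewrite scale1r one_pop /=; congr pop; apply/ffunP => k; by rewrite !ffunE.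
have [c c0 ->] := IH ur.
rewrite mxpow_Z mxpow_X pop_mul dot_vzero oppr0 ph0 scale1r vadd0 vadd0r.
rewrite -scalemxAr pop_mul scalerA.
exists (c * ph (- dot (restr fa r) (evec i (fb i)%:R))).
  by rewrite mulf_neq0 // ph_neq0.
congr (_ *: pop _ _); apply/ffunP => k; rewrite !ffunE in_cons.
  case: eqP => [->|_] /=; last by rewrite add0r.
  by rewrite (negbTE ni) addr0.
case: eqP => [->|_] /=; last by rewrite add0r.
by rewrite (negbTE ni) addr0.
Qed.

Definition pvec_a (P : pdata n) : vec := [ffun k => (pa P k)%:R].
Definition pvec_b (P : pdata n) : vec := [ffun k => (pb P k)%:R].

Lemma pauli_pop (P : pdata n) : exists2 c, c != 0 &
  pauli D P = c *: pop (pvec_a P) (pvec_b P).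
Proof.
have [c c0 E] := foldr_pop (pa P) (pb P) (enum_uniq 'I_n).
exists (omega D ^+ pk P * c); first by rewrite mulf_neq0 // expf_neq0 // omega_neq0.
rewrite /pauli E scalerA; congr (_ *: pop _ _); apply/ffunP => k;
  by rewrite !ffunE mem_enum.
Qed.


Definition upd (a : vec) i (x : 'I_D) : vec := [ffun k => if k == i then x else a k].

Lemma dot_upd a i x s : dot (upd a i x) s = dot a s + (x - a i) * s i.
Proof.
rewrite /dot (bigD1 i) //= [in RHS](bigD1 i) //= ffunE eqxx.
rewrite (eq_bigr (fun k => a k * s k)); first by ring.
by move=> k nk; rewrite ffunE (negbTE nk).
Qed.

Lemma dot_upd_r a i x s : dot a (upd s i x) = dot a s + a i * (x - s i).
Proof.
rewrite /dot (bigD1 i) //= [in RHS](bigD1 i) //= ffunE eqxx.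
rewrite (eq_bigr (fun k => a k * s k)); first by ring.
by move=> k nk; rewrite ffunE (negbTE nk).
Qed.

Definition cx i j (t : st) : st := upd t j (t i + t j).

Lemma CXq_mk i j : CXq D i j = mkop (fun s t => (s == cx i j t)%:R).
Proof.
apply: mkop_ext => s t; congr ((nat_of_bool _)%:R).
apply/andP/eqP => [[/forallP h1 /eqP h2]|->].
  apply/ffunP => k; rewrite !ffunE.
  case: eqP => [->|/eqP nk]; first by apply: val_inj; rewrite /= h2.
  by apply/eqP; exact: (implyP (h1 k) nk).
split; last by rewrite !ffunE eqxx.
by apply/forallP => k; apply/implyP => nk; rewrite !ffunE (negbTE nk).
Qed.

Lemma CX_rule i j a b : i != j ->
  CXq D i j *m pop a b = pop (upd a i (a i - a j)) (upd b j (b j + b i)) *m CXq D i j.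
Proof.
move=> nij; rewrite CXq_mk mul_pop_r mul_pop_l; apply: mkop_ext => s t.
have E : cx i j (shift b t) = shift (upd b j (b j + b i)) (cx i j t).
  apply/ffunP => k; rewrite !ffunE; case: eqP => _ //.
  ring.
rewrite E [shift (vneg _) _ == _]eq_sym -shift_eq.
have [->|_] := eqVneq s (shift (upd b j (b j + b i)) (cx i j t)); last by rewrite mul0r mulr0.
rewrite -E mul1r mulr1; apply: ph_eq.
rewrite dot_upd /cx dot_upd_r !ffunE (negbTE nij); ring.
Qed.


Lemma natD0 : (D%:R : 'I_D) = 0.
Proof. by apply: val_inj; rewrite Zp_nat /= modnn. Qed.

Section Odd.
Hypothesis hodd : odd D.

Definition e2 : 'I_D := ((m.+3) %/ 2)%:R.

Lemma e2E : e2 * 2%:R = 1.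
Proof.
rewrite /e2 -natrM divnK; last by rewrite dvdn2 /= negbK.
by rewrite -addn1 natrD natD0 add0r.
Qed.

Lemma eq_e (z x y : 'I_D) : x - y = (e2 * 2%:R - 1) * z -> x = y.
Proof. by rewrite e2E subrr mul0r => /eqP; rewrite subr_eq0 => /eqP. Qed.

Lemma sigma_ph (x : 'I_D) : omega D ^+ ((x * x.+1) %/ 2) = ph (e2 * (x * (x + 1))).
Proof.
rewrite ph_nat; apply: ph_eq.
have h2 : (2 %| x * x.+1)%N by rewrite dvdn2 oddM /=; case: (odd x).
transitivity (e2 * (2%:R * ((x * x.+1) %/ 2)%:R)).
  by rewrite mulrA e2E mul1r.
by rewrite -natrM mulnC divnK // natrM natr_Zp -[x.+1]addn1 natrD natr_Zp.
Qed.

Lemma Sq_mk (i : 'I_n) : Sq D i = mkop (fun s t => (s == t)%:R * ph (e2 * (t i * (t i + 1)))).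
Proof. by apply: mkop_ext => s t; rewrite sigma_ph. Qed.

Lemma S_rule i a b :
  Sq D i *m pop a b = ph (e2 * (b i - b i * b i)) *: (pop (upd a i (a i + b i)) b *m Sq D i).
Proof.
rewrite Sq_mk mul_pop_r mul_pop_l scale_mkop; apply: mkop_ext => s t.
rewrite [shift (vneg _) _ == _]eq_sym -shift_eq.
have [->|_] := eqVneq s (shift b t); last by rewrite !mul0r !mulr0.
rewrite !mul1r -!phD; apply: ph_eq.
rewrite dot_upd !ffunE. apply: (@eq_e (t i * b i + b i * b i)). ring.
Qed.

End Odd.


Definition rsq : algC := (sqrtC D%:R)^-1.

Lemma Fq_mk (i : 'I_n) : Fq D i = mkop (fun s t => (agree_off i s t)%:R * ph (t i * s i) * rsq).
Proof. by apply: mkop_ext => s t; rewrite phM_nat. Qed.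

Lemma agree_shift i b x s t :
  agree_off i s (shift b t) = agree_off i (shift (vneg (upd b i x)) s) t.
Proof.
apply: eq_forallb => k; case: (eqVneq k i) => [->|nk] //=.
rewrite !ffunE (negbTE nk); apply/eqP/eqP => [->|<-]; ring.
Qed.

Lemma F_rule i a b :
  Fq D i *m pop a b = ph (a i * b i) *: (pop (upd a i (b i)) (upd b i (- a i)) *m Fq D i).
Proof.
rewrite Fq_mk mul_pop_r mul_pop_l scale_mkop; apply: mkop_ext => s t.
rewrite -(agree_shift i b (- a i)).
case: (boolP (agree_off i s (shift b t))) => [ag|_]; last by rewrite !mul0r !mulr0.
have Es : s = upd (shift b t) i (s i).
  apply/ffunP => k; rewrite ffunE; case: eqP => [->|/eqP nk] //.
  by apply/eqP; exact: (implyP (forallP ag k) nk).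
have Hd : dot a s = dot a (shift b t) + a i * (s i - (t i + b i)).
  by rewrite {1}Es dot_upd_r ffunE.
rewrite !mul1r mulrAC !mulrA -!phD; congr (ph _ * _).
rewrite dot_upd Hd !ffunE eqxx; ring.
Qed.


Lemma perm_unit (pi : st -> st) (phi : st -> algC) : injective pi ->
  (forall t, phi t != 0) ->
  (mkop (fun s t => (s == pi t)%:R * phi t) : Op) \in unitmx.
Proof.
move=> ipi nz.
pose B : Op := mkop (fun u t => (phi u)^-1 * (u == invF ipi t)%:R).
suff /mulmx1_unit [] : (mkop (fun s t => (s == pi t)%:R * phi t) : Op) *m B = 1%:M by [].
rewrite mul_mkop one_mkop; apply: mkop_ext => s t.
rewrite (eq_bigr (fun u => ((s == pi u)%:R * phi u * (phi u)^-1) * (u == invF ipi t)%:R)).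
  by rewrite sum_delta_r (f_invF ipi) mulfK.
by move=> u _; rewrite mulrA.
Qed.

Lemma Sq_unit (i : 'I_n) : odd D -> Sq D i \in unitmx.
Proof.
move=> ho; rewrite (Sq_mk ho).
apply: (@perm_unit id (fun t => ph (e2 * (t i * (t i + 1))))) => // t.
exact: ph_neq0.
Qed.

Lemma cx_inj (i j : 'I_n) : i != j -> injective (cx i j).
Proof.
move=> nij u v /ffunP E; apply/ffunP => k.
have Ei := E i; rewrite !ffunE (negbTE nij) in Ei.
have := E k; rewrite !ffunE; case: eqP => [->|//].
by rewrite Ei => /addrI.
Qed.

Lemma CXq_unit (i j : 'I_n) : i != j -> CXq D i j \in unitmx.
Proof.
move=> nij; rewrite CXq_mk.
have -> : (mkop (fun s t => (s == cx i j t)%:R) : Op) = mkop (fun s t => (s == cx i j t)%:R * 1).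
  by apply: mkop_ext => s t; rewrite mulr1.
by apply: perm_unit => [|t]; [exact: cx_inj | exact: oner_neq0].
Qed.


Section Prim.
Hypothesis hpr : prime D.

Lemma omega_prim : D.-primitive_root (omega D).
Proof.
have [k pk kD] := prim_order_exists (ltn0Sn _) omegaD.
case: (eqVneq k 1) => [k1|k1]; last by move: kD pk => /(prime_nt_dvdP hpr k1) ->.
exfalso; move: pk; rewrite k1 => /prim_expr_order; rewrite expr1 /omega.
set r := D.-root (-1) => r2.
have rD : r ^+ D = -1 by rewrite rootCK.
have : (r - 1) * (r + 1) == 0 by rewrite mulrDr mulr1 mulrBl mul1r -expr2 r2; apply/eqP; ring.
rewrite mulf_eq0 subr_eq0 => /orP [/eqP r1|].
  move: rD; rewrite r1 expr1n => /eqP; rewrite -subr_eq0 opprK.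
  by rewrite (_ : 1 + 1 = 2%:R) // pnatr_eq0.
rewrite addr_eq0 => /eqP rm1.
have : ~~ (r < 0) by rewrite /r rootC_lt0.
by rewrite rm1 ltrN10.
Qed.

Lemma ph_neq1 x : x != 0 -> ph x != 1.
Proof.
move=> x0; rewrite /ph -(prim_order_dvd omega_prim) /dvdn modn_small //.
Qed.

Lemma sum_ph (x : 'I_D) : \sum_(j : 'I_D) ph (j * x) = (x == 0)%:R * D%:R.
Proof.
have E : forall j : 'I_D, ph (j * x) = ph x ^+ j.
  by move=> j; rewrite -phM_nat /ph -exprM mulnC.
rewrite (eq_bigr _ (fun j _ => E j)).
case: (eqVneq x 0) => [->|x0].
  rewrite /ph expr0 (eq_bigr (fun _ => 1)) => [|j _]; last by rewrite expr1n.
  by rewrite sumr_const card_ord mul1r.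
rewrite mul0r.
have := subrX1 (ph x) D.
rewrite /ph -exprM mulnC exprM omegaD expr1n subrr => /esym /eqP.
by rewrite mulf_eq0 subr_eq0 (negbTE (ph_neq1 x0)) /= => /eqP.
Qed.


Lemma agree_trans i (s u t : st) : agree_off i s u -> agree_off i u t -> agree_off i s t.
Proof.
move=> /forallP h1 /forallP h2; apply/forallP => k; apply/implyP => nk.
by rewrite (eqP (implyP (h1 k) nk)) (implyP (h2 k) nk).
Qed.

Lemma agree_sym i (s t : st) : agree_off i s t = agree_off i t s.
Proof. by rewrite /agree_off; apply: eq_forallb => k; rewrite [s k == _]eq_sym. Qed.

Lemma agree_upd i (s : st) j : agree_off i s (upd s i j).
Proof. by apply/forallP => k; apply/implyP => nk; rewrite ffunE (negbTE nk). Qed.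

Lemma sum_agree i (s : st) (g : 'I_D -> algC) :
  \sum_u (agree_off i s u)%:R * g (u i) = \sum_(j : 'I_D) g j.
Proof.
transitivity (\sum_(j : 'I_D) \sum_u (upd s i j == u)%:R * g (u i)); last first.
  by apply: eq_bigr => j _; rewrite (sum_delta_l (fun u => g (u i))) ffunE eqxx.
rewrite exchange_big; apply: eq_bigr => u _; rewrite -mulr_suml; congr (_ * _).
case: (boolP (agree_off i s u)) => ag.
  rewrite (bigD1 (u i)) //= big1 ?addr0.
    suff -> : upd s i (u i) = u by rewrite eqxx.
    apply/ffunP => k; rewrite ffunE; case: eqP => [->|/eqP nk] //.
    exact/eqP/(implyP (forallP ag k) nk).
  move=> j nj; case: eqP => // E; move: nj; rewrite -E ffunE eqxx.
  by rewrite eqxx.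
rewrite big1 // => j _; case: eqP => // E; move: ag; rewrite -E agree_upd.
by [].
Qed.

Lemma Fq_unit (i : 'I_n) : Fq D i \in unitmx.
Proof.
pose F' : Op := mkop (fun s t => (agree_off i s t)%:R * ph (- (t i * s i))).
have E : Fq D i *m F' = (rsq * D%:R) *: 1%:M.
  rewrite Fq_mk mul_mkop one_mkop scale_mkop; apply: mkop_ext => s t.
  case: (boolP (agree_off i s t)) => ag.
    rewrite (eq_bigr (fun u => rsq * ((agree_off i s u)%:R * ph (u i * (s i - t i))))).
      rewrite -mulr_sumr (sum_agree i s (fun j => ph (j * (s i - t i)))) sum_ph // subr_eq0 -mulrA; congr (_ * _).
      rewrite mulrC; congr (_ * _); congr ((nat_of_bool _)%:R).
      apply/eqP/eqP => [E|->] //; apply/ffunP => k.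
      case: (eqVneq k i) => [->|nk] //; exact/eqP/(implyP (forallP ag k) nk).
    move=> u _; case: (boolP (agree_off i s u)) => agu; last by rewrite !mul0r mulr0.
    have -> : agree_off i u t by apply: agree_trans ag; rewrite agree_sym.
    rewrite !mul1r mulrAC -phD mulrC; congr (_ * ph _); ring.
  rewrite big1; last first.
    move=> u _; case: (boolP (agree_off i s u)) => agu; last by rewrite !mul0r.
    case: (boolP (agree_off i u t)) => agt; last by rewrite !mul0r mulr0.
    by move: ag; rewrite (agree_trans agu agt).
  case: eqP => [E|]; last by rewrite mulr0.
  by move: ag; rewrite E; case/forallP; move=> k; rewrite eqxx implybT.
have nz : rsq * D%:R != 0.
  rewrite mulf_neq0 ?invr_eq0 ?sqrtC_eq0 ?pnatr_eq0 //.
have /mulmx1_unit [] // : Fq D i *m ((rsq * D%:R)^-1 *: F') = 1%:M.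
by rewrite -scalemxAr E scalerA mulVf ?scale1r.
Qed.

End Prim.


Definition pv := (vec * vec)%type.

Definition gmap (g : gate n) (v : pv) : pv :=
  match g with
  | GF i => (upd v.1 i (v.2 i), upd v.2 i (- v.1 i))
  | GS i => (upd v.1 i (v.1 i + v.2 i), v.2)
  | GCX i j => (upd v.1 i (v.1 i - v.1 j), upd v.2 j (v.2 j + v.2 i))
  end.

Definition ppop (v : pv) : Op := pop v.1 v.2.

Definition conj_rel (U : Op) (v w : pv) := exists c : algC, U *m ppop v = c *: (ppop w *m U).

Section Gates.
Hypothesis hpr : prime D.
Hypothesis hodd : odd D.

Lemma gate_rule (g : gate n) v : gate_ok g -> conj_rel (gate_op D g) v (gmap g v).
Proof.
case: g => [i|i|i j] /= ok.
- by exists (ph (v.1 i * v.2 i)); rewrite /ppop F_rule.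
- by exists (ph (e2 * (v.2 i - v.2 i * v.2 i))); rewrite /ppop (S_rule hodd).
- by exists 1; rewrite scale1r /ppop CX_rule.
Qed.

Lemma gate_unit (g : gate n) : gate_ok g -> gate_op D g \in unitmx.
Proof.
case: g => [i|i|i j] /= ok; [exact: Fq_unit | exact: Sq_unit | exact: CXq_unit].
Qed.

Lemma conj_comp (U V : Op) u v w : conj_rel U u v -> conj_rel V v w -> conj_rel (V *m U) u w.
Proof.
move=> [c1 h1] [c2 h2]; exists (c1 * c2).
by rewrite -mulmxA h1 -scalemxAr [V *m (ppop v *m U)]mulmxA h2 -scalemxAl scalerA mulmxA.
Qed.

Variable o : 'I_n.
Definition X0 : pv := (vzero, evec o 1).
Definition Z0 : pv := (evec o 1, vzero).

Definition reach (x z : pv) := exists c : seq (gate n),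
  [/\ all (@gate_ok n) c, circuit_op D c \in unitmx,
      conj_rel (circuit_op D c) X0 x & conj_rel (circuit_op D c) Z0 z].

Lemma reach0 : reach X0 Z0.
Proof.
exists [::]; split => //=; first exact: unitmx1.
  by exists 1; rewrite scale1r mul1mx mulmx1.
by exists 1; rewrite scale1r mul1mx mulmx1.
Qed.

Lemma reach_gate (g : gate n) x z : gate_ok g -> reach x z -> reach (gmap g x) (gmap g z).
Proof.
move=> ok [c [okc uc hx hz]]; exists (g :: c); split => /=.
- by rewrite ok.
- by rewrite unitmx_mul gate_unit.
- exact: conj_comp hx (gate_rule _ ok).
- exact: conj_comp hz (gate_rule _ ok).
Qed.

Lemma reach_lambda (M : 'I_D -> pv -> pv) :
  (forall v, M 0 v = v) -> (forall l v, M (l + 1) v = M 1 (M l v)) ->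
  (forall x z, reach x z -> reach (M 1 x) (M 1 z)) ->
  forall l x z, reach x z -> reach (M l x) (M l z).
Proof.
move=> M0 MS M1 l x z r; rewrite -(natr_Zp l).
elim: (nat_of_ord l) => [|j IH]; first by rewrite !M0.
by rewrite -addn1 natrD !MS; apply: M1.
Qed.


Ltac vcase := repeat match goal with
  | |- context [?x == ?y] => case: (eqVneq x y) => [?|?]; try subst
  end;
  try by match goal with H : is_true (?x != ?x) |- _ => move: H; rewrite eqxx end.

Ltac vsolve := apply/ffunP => t; rewrite !ffunE /=; vcase; ring.

Section Macros.
Variable k : 'I_n.
Hypothesis ko : k != o.

Definition mT (l : 'I_D) (v : pv) : pv := (v.1,
  [ffun t => v.2 t - (if t == k then l * v.1 o else 0) - (if t == o then l * v.1 k else 0)]).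
Definition mC (l : 'I_D) (v : pv) : pv :=
  ([ffun t => v.1 t - (if t == k then l * v.1 o else 0)],
   [ffun t => v.2 t + (if t == o then l * v.2 k else 0)]).
Definition mR (l : 'I_D) (v : pv) : pv := (v.1,
  [ffun t => v.2 t - (if t == o then l * v.1 o else 0)]).
Definition mT' (l : 'I_D) (v : pv) : pv :=
  ([ffun t => v.1 t - (if t == k then l * v.2 o else 0) - (if t == o then l * v.2 k else 0)],
   v.2).
Definition mC' (l : 'I_D) (v : pv) : pv :=
  ([ffun t => v.1 t - (if t == o then l * v.1 k else 0)],
   [ffun t => v.2 t + (if t == k then l * v.2 o else 0)]).
Definition mS (l : 'I_D) (v : pv) : pv :=
  ([ffun t => v.1 t + (if t == o then l * v.2 o else 0)], v.2).

Lemma mT0 v : mT 0 v = v.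
Proof. by case: v => a b; rewrite /mT /=; congr (_, _); vsolve. Qed.
Lemma mTS l v : mT (l + 1) v = mT 1 (mT l v).
Proof. by case: v => a b; rewrite /mT /=; congr (_, _); vsolve. Qed.
Lemma mT1 v : mT 1 v = gmap (GF k) (gmap (GF k) (gmap (GF k) (gmap (GCX k o) (gmap (GF k) v)))).
Proof. by case: v => a b; rewrite /mT /=; congr (_, _); vsolve. Qed.


Lemma mC0 v : mC 0 v = v.
Proof. by case: v => a b; rewrite /mC /=; congr (_, _); vsolve. Qed.
Lemma mCS l v : mC (l + 1) v = mC 1 (mC l v).
Proof. by case: v => a b; rewrite /mC /=; congr (_, _); vsolve. Qed.
Lemma mC1 v : mC 1 v = gmap (GCX k o) v.
Proof. by case: v => a b; rewrite /mC /=; congr (_, _); vsolve. Qed.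

Lemma mR0 v : mR 0 v = v.
Proof. by case: v => a b; rewrite /mR /=; congr (_, _); vsolve. Qed.
Lemma mRS l v : mR (l + 1) v = mR 1 (mR l v).
Proof. by case: v => a b; rewrite /mR /=; congr (_, _); vsolve. Qed.
Lemma mR1 v : mR 1 v = gmap (GF o) (gmap (GF o) (gmap (GF o) (gmap (GS o) (gmap (GF o) v)))).
Proof. by case: v => a b; rewrite /mR /=; congr (_, _); vsolve. Qed.

Lemma mT'0 v : mT' 0 v = v.
Proof. by case: v => a b; rewrite /mT' /=; congr (_, _); vsolve. Qed.
Lemma mT'S l v : mT' (l + 1) v = mT' 1 (mT' l v).
Proof. by case: v => a b; rewrite /mT' /=; congr (_, _); vsolve. Qed.
Lemma mT'1 v : mT' 1 v = gmap (GF k) (gmap (GF k) (gmap (GF k) (gmap (GCX o k) (gmap (GF k) v)))).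
Proof. by case: v => a b; rewrite /mT' /=; congr (_, _); vsolve. Qed.

Lemma mC'0 v : mC' 0 v = v.
Proof. by case: v => a b; rewrite /mC' /=; congr (_, _); vsolve. Qed.
Lemma mC'S l v : mC' (l + 1) v = mC' 1 (mC' l v).
Proof. by case: v => a b; rewrite /mC' /=; congr (_, _); vsolve. Qed.
Lemma mC'1 v : mC' 1 v = gmap (GCX o k) v.
Proof. by case: v => a b; rewrite /mC' /=; congr (_, _); vsolve. Qed.

Lemma mS0 v : mS 0 v = v.
Proof. by case: v => a b; rewrite /mS /=; congr (_, _); vsolve. Qed.
Lemma mSS l v : mS (l + 1) v = mS 1 (mS l v).
Proof. by case: v => a b; rewrite /mS /=; congr (_, _); vsolve. Qed.
Lemma mS1 v : mS 1 v = gmap (GS o) v.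
Proof. by case: v => a b; rewrite /mS /=; congr (_, _); vsolve. Qed.


Lemma okF (i : 'I_n) : gate_ok (GF i). Proof. by []. Qed.
Lemma okS (i : 'I_n) : gate_ok (GS i). Proof. by []. Qed.
Lemma ok_ko : gate_ok (GCX k o). Proof. exact: ko. Qed.
Lemma ok_ok : gate_ok (GCX o k). Proof. by rewrite /= eq_sym. Qed.

Lemma reach_mT l x z : reach x z -> reach (mT l x) (mT l z).
Proof.
apply: reach_lambda mT0 mTS _ l x z => x z r; rewrite !mT1.
do 3 apply: reach_gate (okF _) _; apply: reach_gate ok_ko _; exact: reach_gate (okF _) r.
Qed.


Lemma reach_mC l x z : reach x z -> reach (mC l x) (mC l z).
Proof.
apply: reach_lambda mC0 mCS _ l x z => x z r; rewrite !mC1.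
exact: reach_gate ok_ko r.
Qed.

Lemma reach_mR l x z : reach x z -> reach (mR l x) (mR l z).
Proof.
apply: reach_lambda mR0 mRS _ l x z => x z r; rewrite !mR1.
do 3 apply: reach_gate (okF _) _; apply: reach_gate (okS _) _; exact: reach_gate (okF _) r.
Qed.

Lemma reach_mT' l x z : reach x z -> reach (mT' l x) (mT' l z).
Proof.
apply: reach_lambda mT'0 mT'S _ l x z => x z r; rewrite !mT'1.
do 3 apply: reach_gate (okF _) _; apply: reach_gate ok_ok _; exact: reach_gate (okF _) r.
Qed.

Lemma reach_mC' l x z : reach x z -> reach (mC' l x) (mC' l z).
Proof.
apply: reach_lambda mC'0 mC'S _ l x z => x z r; rewrite !mC'1.
exact: reach_gate ok_ok r.
Qed.

Lemma reach_mS l x z : reach x z -> reach (mS l x) (mS l z).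
Proof.
apply: reach_lambda mS0 mSS _ l x z => x z r; rewrite !mS1.
exact: reach_gate (okS _) r.
Qed.

End Macros.


Section Phases.
Variables ax bx az bz : vec.
Hypotheses (hax : ax o = 0) (hbx : bx o = 1) (haz : az o = 1) (hbz : bz o = 0).

Definition zL (L : seq 'I_n) : pv :=
  ([ffun l => if l == o then 1 else if l \in L then az l else 0],
   [ffun l => if l == o then 0 else if l \in L then bz l else 0]).

Lemma zphase L : uniq L -> o \notin L -> reach X0 (zL L).
Proof.
elim: L => [_ _|k L IH /= /andP [kL uL]].
  have -> : zL [::] = Z0.
    by rewrite /zL /Z0; congr (_, _); apply/ffunP => t; rewrite !ffunE in_nil /=; vcase.
  exact: reach0.
rewrite in_cons negb_or => /andP [ok oL].
have ko : k != o by rewrite eq_sym.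
have := reach_mR (- ((- bz k) * (- az k)))
   (reach_mC ko (- az k) (reach_mT ko (- bz k) (IH uL oL))).
congr reach.
  by rewrite /mR /mC /mT /X0 /=; congr (_, _); apply/ffunP => t; rewrite !ffunE /=;
    vcase; ring.
rewrite /mR /mC /mT /zL /=; congr (_, _); apply/ffunP => t; rewrite !ffunE /= ?in_cons;
  vcase; rewrite ?eqxx /= ?(negbTE kL) ?(negbTE oL) ?hax ?hbx ?haz ?hbz /=.
all: try (match goal with |- context [?x \in ?M] => case: (x \in M) end).
all: ring.
Qed.

Definition xL (L : seq 'I_n) : pv :=
  ([ffun l => if l == o then 0 else if l \in L then ax l else 0],
   [ffun l => if l == o then 1 else if l \in L then bx l else 0]).

Definition zF (L : seq 'I_n) : pv :=
  ([ffun l => if l == o then 1 + \sum_(j <- L) (ax j * bz j - bx j * az j) else az l],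
   [ffun l => if l == o then 0 else bz l]).

Lemma xphase L : reach X0 (zF [::]) -> uniq L -> o \notin L -> reach (xL L) (zF L).
Proof.
move=> r0; elim: L => [_ _|k L IH /= /andP [kL uL]].
  have -> // : xL [::] = X0.
  by rewrite /xL /X0; congr (_, _); apply/ffunP => t; rewrite !ffunE in_nil /=; vcase.
rewrite in_cons negb_or => /andP [ok oL].
have ko : k != o by rewrite eq_sym.
have := reach_mS (- ((- ax k) * bx k))
   (reach_mC' ko (bx k) (reach_mT' ko (- ax k) (IH uL oL))).
congr reach.
{ rewrite /mS /mC' /mT' /xL /=; congr (_, _); apply/ffunP => t; rewrite !ffunE /= ?in_cons;
    vcase; rewrite ?eqxx /= ?(negbTE kL) ?(negbTE oL) ?hax ?hbx ?haz ?hbz /=.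
  all: try (match goal with |- context [?x \in ?M] => case: (x \in M) end).
  all: ring. }
rewrite /mS /mC' /mT' /zF /= big_cons; congr (_, _); apply/ffunP => t; rewrite !ffunE /=;
  vcase; rewrite ?eqxx /= ?hax ?hbx ?haz ?hbz /=.
all: ring.
Qed.


Definition Lall : seq 'I_n := [seq k <- index_enum 'I_n | k != o].

Lemma reach_target :
  \sum_k (ax k * bz k - bx k * az k) = -1 -> reach (ax, bx) (az, bz).
Proof.
move=> hs.
have uL : uniq Lall by rewrite filter_uniq // index_enum_uniq.
have oL : o \notin Lall by rewrite mem_filter eqxx.
have memL t : (t \in Lall) = (t != o) by rewrite mem_filter mem_index_enum andbT.
have r0 : reach X0 (zF [::]).
  have <- : zL Lall = zF [::].
    rewrite /zL /zF big_nil addr0; congr (_, _); apply/ffunP => t;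
      by rewrite !ffunE memL; case: eqP.
  exact: zphase.
have := xphase r0 uL oL; congr reach.
  by rewrite /xL; congr (_, _); apply/ffunP => t; rewrite !ffunE memL;
    case: eqP => [->|].
have S0 : \sum_(j <- Lall) (ax j * bz j - bx j * az j) = 0.
  move: hs; rewrite (bigD1 o) //= hax hbx haz hbz /Lall big_filter.
  rewrite mul0r mul1r sub0r => h; apply: (addrI (-1)); by rewrite h addr0.
rewrite /zF S0 addr0; congr (_, _); apply/ffunP => t; rewrite !ffunE;
  by case: eqP => [->|].
Qed.

End Phases.

End Gates.

End Setup.

Lemma intr_mod (m : nat) (x y : int) : (x = y %[mod m.+2])%Z -> (x%:~R : 'I_m.+2) = y%:~R.
Proof.
move=> h; rewrite (divz_eq x m.+2) (divz_eq y m.+2) h !intrD !intrM.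
by rewrite -pmulrn natD0 !mulr0.
Qed.

Lemma sympl_Z (m n : nat) (P Q : pdata n) : ((sympl P Q)%:~R : 'I_m.+2) =
  \sum_k (pvec_a m P k * pvec_b m Q k - pvec_b m P k * pvec_a m Q k).
Proof.
rewrite /sympl rmorph_sum; apply: eq_bigr => k _; rewrite rmorphB /= !ffunE -!natrM.
by [].
Qed.

Unset Implicit Arguments.

Theorem lemma10 (d n : nat) (hd : prime d) (hodd : odd d) (hn : (2 <= n)%N)
  (Pbar : 'I_n * bool -> pdata n) :
  comm_preserving d Pbar ->
  (* bar X_1 = X (x) P' : exponents (a,b) = (0,1) mod d on the first qudit *)
  (pa (Pbar (q1 (ltnW hn), false)) (q1 (ltnW hn)) %% d = 0)%N ->
  (pb (Pbar (q1 (ltnW hn), false)) (q1 (ltnW hn)) %% d = 1)%N ->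
  (* bar Z_1 = Z (x) Q' : exponents (a,b) = (1,0) mod d on the first qudit *)
  (pa (Pbar (q1 (ltnW hn), true)) (q1 (ltnW hn)) %% d = 1)%N ->
  (pb (Pbar (q1 (ltnW hn), true)) (q1 (ltnW hn)) %% d = 0)%N ->
  exists c : seq (gate n), all (@gate_ok n) c /\
    exists lambda mu : algC,
      circuit_op d c *m Xq d (q1 (ltnW hn)) *m invmx (circuit_op d c)
        = lambda *: pauli d (Pbar (q1 (ltnW hn), false)) /\
      circuit_op d c *m Zq d (q1 (ltnW hn)) *m invmx (circuit_op d c)
        = mu *: pauli d (Pbar (q1 (ltnW hn), true)).
Proof.
move=> cp hxa hxb hza hzb.
destruct d as [|[|m]]; [by [] | by [] |].
set o := q1 (ltnW hn).
set Px := Pbar (o, false); set Pz := Pbar (o, true).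
have natv (k r : nat) : (k %% m.+2 = r)%N -> (r < m.+2)%N -> ((k%:R : 'I_m.+2) = r%:R).
  by move=> h hr; apply: val_inj; rewrite !Zp_nat /= h modn_small.
have hax : pvec_a m Px o = 0 by rewrite ffunE (natv _ 0%N).
have hbx : pvec_b m Px o = 1 by rewrite ffunE (natv _ 1%N).
have haz : pvec_a m Pz o = 1 by rewrite ffunE (natv _ 1%N).
have hbz : pvec_b m Pz o = 0 by rewrite ffunE (natv _ 0%N).
have hs : \sum_k (pvec_a m Px k * pvec_b m Pz k - pvec_b m Px k * pvec_a m Pz k) = -1.
  rewrite -sympl_Z -(intr_mod (cp (o, false) (o, true))) sympl_Z.
  rewrite (bigD1 o) //= big1 => [|k nk]; rewrite !ffunE /= ?eqxx.
    by rewrite mul0r mul1r sub0r addr0.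
  by rewrite (negbTE nk) !mul0r subrr.
have [c [okc uc [cx hX] [cz hZ]]] := reach_target hd hodd hax hbx haz hbz hs.
exists c; split => //.
have [kx kx0 Ex] := pauli_pop m Px.
have [kz kz0 Ez] := pauli_pop m Pz.
exists (cx / kx), (cz / kz); rewrite Ex Ez !scalerA !divfK //; split.
  by rewrite Xq_pop hX -scalemxAl mulmxK.
by rewrite Zq_pop hZ -scalemxAl mulmxK.
Qed.
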